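(* Let $X$ be a Hausdorff topological space, $T:X\to X$ continuous, $V\subseteq X$ a nonempty open set and $\delta>0$ such that for every nonempty open set $U\subseteq V$ there is $x_U\in U$ with $\overline{Bd}(N_T(x_U,U))>\delta$. Then there is $j\ge1$ such that $T^j|_V=\mathrm{Id}_V$.
   Context: $N_T(x,U)=\{n\in\mathbb N:T^nx\in U\}$. The upper Banach density of $A\subseteq\mathbb N$ is $\overline{Bd}(A)=\lim_n\sup_k\#(A\cap[k,k+n])/n$. *)

(* Defs.v *)
From HB Require Import structures.
From mathcomp Require Import all_boot all_order all_algebra.
From mathcomp Require Import all_classical all_reals all_analysis.
Set Implicit Arguments. Unset Strict Implicit. Unset Printing Implicit Defensive.
Import Order.TTheory GRing.Theory Num.Theory.
Import numFieldNormedType.Exports.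
Local Open Scope classical_set_scope.
Local Open Scope ring_scope.

Definition return_times {X : Type} (T : X -> X) (x : X) (U : set X) : set nat :=
  [set n | U (iter n T x)].

Definition count_window (A : set nat) (k n : nat) : nat :=
  (\sum_(k <= i < (k + n).+1) (asbool (A i) : nat))%N.

Definition banach_window {R : realType} (A : set nat) (n : nat) : R :=
  sup [set ((count_window A k n)%:R / n%:R : R) | k in [set: nat]].

Definition upper_banach_density {R : realType} (A : set nat) : R :=
  limn (@banach_window R A).

(* Main.v *)
Require Import Defs.
From HB Require Import structures.
From mathcomp Require Import all_boot all_order all_algebra.
From mathcomp Require Import all_classical all_reals all_analysis.
From mathcomp Require Import zify.
Import Order.TTheory GRing.Theory Num.Theory.
Import numFieldNormedType.Exports.
Local Open Scope classical_set_scope.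
Local Open Scope ring_scope.

Section Counting.
Variable (A : set nat) (K : nat).
Hypothesis hK : (0 < K)%N.
Hypothesis gap : forall n d, A n -> (0 < d < K)%N -> ~ A (n + d)%N.

Let c k m := (\sum_(k <= i < k + m) (asbool (A i) : nat))%N.

Lemma c_le1 k m : (m <= K)%N -> (c k m <= 1)%N.
Proof.
elim: m => [|m IH] hm; first by rewrite /c addn0 big_geq // muln0.
rewrite /c addnS big_nat_recr ?leq_addr //=.
have := IH (ltnW hm); rewrite /c.
case: (asboolP (A (k + m))) => Akm; last by rewrite addn0.
rewrite big_nat_cond big1 // => i /andP [/andP [ki im] _].
case: asboolP => // Ai; exfalso.
have hd : (0 < k + m - i < K)%N by lia.
have := gap _ _ Ai hd.
by have -> : (i + (k + m - i) = k + m)%N by lia.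
Qed.

Lemma c_split k a b : c k (a + b) = (c k a + c (k + a) b)%N.
Proof. by rewrite /c addnA -big_cat_nat ?leq_addr //= leq_addr. Qed.

Lemma c_bound m k : (K * c k m <= m + K - 1)%N.
Proof.
elim: m {-2}m (leqnn m) k => [|M IH] m hm k.
  have m0 : m = 0%N by lia.
  rewrite m0 /c addn0 big_geq //; lia.
case: (leqP m K) => hmK.
  case: m hm hmK => [|m] hm hmK; first by rewrite /c addn0 big_geq // muln0.
  have := c_le1 k m.+1 hmK; nia.
have -> : m = (K + (m - K))%N by lia.
rewrite c_split.
have h1 := c_le1 k K (leqnn K).
have h2 := IH (m - K)%N ltac:(lia) (k + K)%N.
nia.
Qed.

Lemma cw_bound k n : (K * count_window A k n <= n + K)%N.
Proof.
have := c_bound n.+1 k; rewrite /count_window /c.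
have e : (k + n.+1 = (k + n).+1)%N by lia.
by rewrite e; lia.
Qed.

Lemma bw_bound (R : realType) n : (K <= n)%N -> @banach_window R A n <= 2 / K%:R.
Proof.
move=> hn; rewrite /banach_window; apply: ge_sup.
  by exists ((count_window A 0 n)%:R / n%:R), 0%N.
move=> _ [k _ <-].
have n0 : (0 < n)%N by lia.
have hn' : (0:R) < n%:R by rewrite ltr0n.
have hK' : (0:R) < K%:R by rewrite ltr0n.
rewrite ler_pdivrMr // mulrAC ler_pdivlMr //.
have := cw_bound k n => h.
have h2 : (count_window A k n * K <= 2 * n)%N by lia.
by rewrite -natrM -natrM ler_nat.
Qed.

Lemma ubd_bound (R : realType) : @upper_banach_density R A <= 2 / K%:R.
Proof.
rewrite /upper_banach_density.
case: (pselect (cvgn (@banach_window R A))) => hc.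
  apply: limr_le => //; exists K => // n /= hn; exact: bw_bound.
rewrite /lim /lim_in xgetPN; first by rewrite divr_ge0 ?ler0n.
by move=> l /cvgP.
Qed.

End Counting.

Lemma iter_cont (X : topologicalType) (T : X -> X) n :
  continuous T -> continuous (iter n T).
Proof.
move=> hT; elim: n => [|n IH] x /=; first exact: cvg_id.
exact: (@continuous_comp _ _ _ (iter n T) T x (IH x) (hT _)).
Qed.

Theorem mainTheorem13 (R : realType) (X : topologicalType) (T : X -> X)
  (V : set X) (delta : R) :
  hausdorff_space X -> continuous T -> open V -> V !=set0 -> 0 < delta ->
  (forall U : set X, open U -> U !=set0 -> U `<=` V ->
     exists2 xU, U xU & delta < upper_banach_density (return_times T xU U)) ->
  exists2 j : nat, (1 <= j)%N & forall x, V x -> iter j T x = x.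
Proof.
move=> hH hT oV _ d0 hyp.
have hd : 0 <= 2 / delta by rewrite divr_ge0 // ltW.
set K := Num.Def.archi_bound (2 / delta).
have hKb := archi_boundP hd; rewrite -/K in hKb.
have K0 : (0 < K)%N.
  by rewrite -(ltr0n R); apply: le_lt_trans hKb; rewrite divr_ge0 // ltW.
have hKd : 2 / K%:R < delta.
  rewrite ltr_pdivrMr ?ltr0n // mulrC -ltr_pdivrMr //.
exists K`!; first exact: fact_gt0.
move=> x Vx; apply: contrapT => hx.
have hd' : forall d : 'I_K, (0 < d)%N -> iter d T x <> x.
  move=> d dpos hdx; apply: hx.
  have /dvdnP [q ->] : (d %| K`!)%N by apply: dvdn_fact; rewrite dpos ltnW.
  rewrite iterM; elim: q => //= q ->; exact: hdx.
have : forall d : 'I_K, exists AB : set X * set X,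
    (0 < d)%N -> [/\ nbhs x AB.1, nbhs (iter d T x) AB.2 & AB.1 `&` AB.2 = set0].
  move=> d; case: (posnP d) => dpos.
    by exists (setT, setT); rewrite dpos.
  have : ~ cluster (nbhs x) (iter d T x).
    by move=> /hH hc; exact: (hd' d dpos (esym hc)).
  move=> /existsNP [A /existsNP [B /not_implyP [nA /not_implyP [nB hAB]]]].
  exists (A, B) => _; split => //; apply/seteqP; split => // y [Ay By].
  by apply: hAB; exists y.
move=> /choice [f hf].
have hnear : \forall y \near x, forall d : 'I_K,
    (0 < d)%N -> (f d).1 y /\ (f d).2 (iter d T y).
  apply: filter_forall => d.
  case: (posnP d) => dpos; first by apply: nearW => y; rewrite dpos.
  case: (hf d dpos) => nA nB _.
  have nB' : nbhs x (iter d T @^-1` (f d).2) by exact: (@iter_cont X T (nat_of_ord d) hT x _ nB).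
  by apply: filterS (filterI nA nB') => y [Ay By] _.
have hn : nbhs x _ := hnear; move: hn; rewrite nbhsE => -[B [oB Bx] BP].
have [|||xU [BxU VxU] hdens] := hyp (B `&` V).
- exact: openI.
- by exists x.
- by move=> y [].
have gapN : forall n d, return_times T xU (B `&` V) n -> (0 < d < K)%N ->
    ~ return_times T xU (B `&` V) (n + d)%N.
  move=> n d [Bn Vn] /andP [dpos dK] [Bnd Vnd].
  rewrite addnC iterD in Bnd.
  have [h1 h2] := BP _ Bn (Ordinal dK) dpos.
  have [h3 _] := BP _ Bnd (Ordinal dK) dpos.
  case: (hf (Ordinal dK) dpos) => _ _ hAB.
  have hin : ((f (Ordinal dK)).1 `&` (f (Ordinal dK)).2) (iter d T (iter n T xU)).
    by split.
  by rewrite hAB in hin.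
have hle := @ubd_bound _ K K0 gapN R.
have := lt_le_trans hdens (le_trans hle (ltW hKd)).
by rewrite ltxx.
Qed.
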